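(* Let $a\in \mathcal{A}$. Then $a\in \mathcal{A}^{\mathrm{gcEP}}$ if and only if (1) $a\in \mathcal{A}^d$; and (2) there exists a projection $q\in \mathcal{A}$ such that $\ell(a^d)=\ell(q)$. In this case, $a^{\mathrm{gcEP}}=a^dq$.
   Context: $\mathcal{A}$ is a complex Banach *-algebra with identity; a projection is $q$ with $q=q^2=q^*$. $\mathcal{A}^d$ is the set of generalized Drazin invertible elements, with $a^d$ the generalized Drazin inverse ($a(a^d)^2=a^d$, $aa^d=a^da$, $a-a^2a^d$ quasinilpotent). $a$ has a generalized core-EP inverse if there is $x\in\mathcal{A}$ with $x=ax^2$, $(ax)^*=ax$, $\lim_{n\to\infty}\|a^n-xa^{n+1}\|^{1/n}=0$; this $x$ is unique, denoted $a^{\mathrm{gcEP}}$, and $\mathcal{A}^{\mathrm{gcEP}}$ is the set of such $a$. $\ell(\cdot)$ denotes the left annihilator. *)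

(* Defs.v *)
From HB Require Import structures.
From mathcomp Require Import all_boot all_order all_algebra.
From mathcomp Require Import all_classical all_reals all_analysis.
From mathcomp Require Import complex.
Set Implicit Arguments. Unset Strict Implicit. Unset Printing Implicit Defensive.
Import Order.TTheory GRing.Theory Num.Theory.
Import numFieldNormedType.Exports.
Local Open Scope ring_scope.
Local Open Scope complex_scope.
Local Open Scope classical_set_scope.

(* The underlying unital complex
   algebra is [A : algType R[i]] (R[i] = the complex numbers over a real
   field R : realType; algType is a non-trivial ring, i.e. 1 != 0). *)
Record BanachStar (R : realType) (A : algType R[i]) := {
  nrm : A -> R;
  star : A -> A;
  nrm_eq0 : forall x, nrm x = 0 <-> x = 0;
  nrm_ge0 : forall x, 0 <= nrm x;
  nrm_triangle : forall x y, nrm (x + y) <= nrm x + nrm y;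
  nrmZ : forall (c : R[i]) x, nrm (c *: x) = complex.Re `|c| * nrm x;
  nrm_submul : forall x y, nrm (x * y) <= nrm x * nrm y;
  nrm1 : nrm 1 = 1;
  nrm_complete : forall u : nat -> A,
    (forall e : R, 0 < e -> exists N, forall m n, (N <= m)%N -> (N <= n)%N ->
        nrm (u m - u n) < e) ->
    exists l, forall e : R, 0 < e -> exists N, forall n, (N <= n)%N ->
        nrm (u n - l) < e;
  starD : forall x y, star (x + y) = star x + star y;
  starZ : forall (c : R[i]) x, star (c *: x) = c^* *: star x;
  starM : forall x y, star (x * y) = star y * star x;
  starK : forall x, star (star x) = x
}.

Section Defs.
Context {R : realType} {A : algType R[i]} (B : BanachStar A).

Definition is_projection (q : A) : Prop := q = q * q /\ q = star B q.

(* quasinilpotent, via the spectral radius formula: ||x^n||^(1/n) -> 0 *)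
Definition quasinilpotent (x : A) : Prop :=
  (fun n : nat => powR (nrm B (x ^+ n)) (n%:R^-1)) @ \oo --> (0 : R).

Definition is_gDrazin_inv (a b : A) : Prop :=
  a * (b * b) = b /\ a * b = b * a /\ quasinilpotent (a - a * a * b).

Definition gDrazin_invertible (a : A) : Prop := exists b, is_gDrazin_inv a b.

(* a^d (unique when it exists; chosen by classical choice, 0 otherwise) *)
Definition gDrazin_inv (a : A) : A := xget 0 [set b | is_gDrazin_inv a b].

Definition is_gcEP_inv (a x : A) : Prop :=
  x = a * (x * x) /\ star B (a * x) = a * x /\
  (fun n : nat => powR (nrm B (a ^+ n - x * a ^+ n.+1)) (n%:R^-1)) @ \oo
     --> (0 : R).

Definition gcEP_invertible (a : A) : Prop := exists x, is_gcEP_inv a x.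

(* a^gcEP (unique when it exists; chosen by classical choice) *)
Definition gcEP_inv (a : A) : A := xget 0 [set x | is_gcEP_inv a x].

Definition lann (x : A) : set A := [set y | y * x = 0].

End Defs.

(* Main.v *)
Require Import Defs.
From HB Require Import structures.
From mathcomp Require Import all_boot all_order all_algebra.
From mathcomp Require Import all_classical all_reals all_analysis.
From mathcomp Require Import complex.
From mathcomp Require Import lra ring.
Import Order.TTheory GRing.Theory Num.Theory.
Import numFieldNormedType.Exports.
Local Open Scope ring_scope.
Local Open Scope classical_set_scope.

Section SM.
Context {R : realType}.

Definition SM (f : nat -> R) := forall rho : R, 0 < rho ->
  exists N, forall n, (N <= n)%N -> f n <= rho ^+ n.

Lemma RS_SM (f : nat -> R) : (forall n, 0 <= f n) ->
  (fun n : nat => powR (f n) (n%:R^-1)) @ \oo --> (0 : R) -> SM f.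
Proof.
move=> f0 /cvgr0Pnorm_lt H rho rho0.
have [N _ HN] := H rho rho0.
exists N.+1 => n Nn.
have /= := HN n (ltnW Nn).
have n0 : (0 < n)%N by apply: leq_trans Nn.
rewrite ger0_norm ?powR_ge0 // => Hlt.
have -> : f n = (powR (f n) (n%:R^-1)) ^+ n.
  rewrite -powR_mulrn ?powR_ge0 // -powRrM mulVf ?powRr1 //.
  by rewrite pnatr_eq0 -lt0n.
by rewrite lerXn2r ?nnegrE ?powR_ge0 ?ltW.
Qed.

Lemma SM_RS (f : nat -> R) : (forall n, 0 <= f n) -> SM f ->
  (fun n : nat => powR (f n) (n%:R^-1)) @ \oo --> (0 : R).
Proof.
move=> f0 H; apply/cvgr0Pnorm_lt => e e0.
have e20 : 0 < e / 2 by rewrite divr_gt0.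
have [N HN] := H _ e20.
exists N.+1 => // n /= Nn.
have n0 : (0 < n)%N by apply: leq_trans Nn.
rewrite ger0_norm ?powR_ge0 //.
apply: (le_lt_trans (y := powR ((e/2) ^+ n) (n%:R^-1))).
  apply: ge0_ler_powR; rewrite ?invr_ge0 ?ler0n ?nnegrE ?f0 //.
    by rewrite exprn_ge0 // ltW.
  by apply: HN; apply: ltnW.
rewrite -powR_mulrn ?ltW // -powRrM mulfV ?powRr1 ?ltW //; last by rewrite pnatr_eq0 -lt0n.
by rewrite ltr_pdivrMr // ltr_pMr // ltr1n.
Qed.

Lemma SM_le (f g : nat -> R) : (exists M, forall n, (M <= n)%N -> g n <= f n) -> SM f -> SM g.
Proof.
move=> [M HM] H rho rho0; have [N HN] := H _ rho0.
exists (maxn M N) => n; rewrite geq_max => /andP[h1 h2].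
by apply: le_trans (HM _ h1) (HN _ h2).
Qed.

Lemma SM_geom (f : nat -> R) (L : R) : 0 <= L -> (forall n, 0 <= f n) -> SM f -> SM (fun n => f n * L ^+ n).
Proof.
move=> L0 f0 H rho rho0.
have h : 0 < rho / (L + 1) by rewrite divr_gt0 // ltr_wpDl.
have [N HN] := H _ h; exists N => n Nn.
apply: (le_trans (y := (rho / (L+1)) ^+ n * L ^+ n)).
  by apply: ler_wpM2r; rewrite ?exprn_ge0 // HN.
rewrite -exprMn; apply: lerXn2r.
- by rewrite nnegrE mulr_ge0 // ltW.
- by rewrite nnegrE ltW.
rewrite mulrAC ler_pdivrMr ?ltr_wpDl // ler_pM2l //.
by rewrite lerDl.
Qed.

Lemma SM_scale (f : nat -> R) (K : R) : 0 <= K -> (forall n, 0 <= f n) -> SM f -> SM (fun n => K * f n).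
Proof.
move=> K0 f0 H rho rho0.
have h : 0 < rho / 2 by rewrite divr_gt0.
have [N HN] := H _ h.
have [M HM] : exists M : nat, K <= M%:R.
  by exists (Num.bound K); apply: ltW; apply: archi_boundP.
exists (maxn M N) => n; rewrite geq_max => /andP[h1 h2].
apply: (le_trans (y := 2 ^+ n * (rho / 2) ^+ n)).
  apply: ler_pM; rewrite ?f0 ?HN //.
  apply: (le_trans HM); rewrite -natrX ler_nat.
  apply: (leq_trans h1); apply: ltnW; apply: ltn_expl => //.
by rewrite -exprMn mulrC divfK ?pnatr_eq0.
Qed.

Lemma SM_add (f g : nat -> R) : (forall n, 0 <= f n) -> (forall n, 0 <= g n) -> SM f -> SM g -> SM (fun n => f n + g n).
Proof.
move=> f0 g0 Hf Hg rho rho0.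
have h : 0 < rho / 2 by rewrite divr_gt0.
have [N1 H1] := Hf _ h; have [N2 H2] := Hg _ h.
exists (maxn 1 (maxn N1 N2)) => n; rewrite !geq_max => /and3P[n1 h1 h2].
apply: (le_trans (lerD (H1 _ h1) (H2 _ h2))).
rewrite -mulr2n expr_div_n -mulrnAr ler_piMr ?exprn_ge0 //; first by rewrite ltW.
rewrite -mulr_natl ler_pdivrMr ?exprn_gt0 // mul1r.
by rewrite -[X in X <= _]expr1 ler_eXn2l // ltr1n.
Qed.

Lemma SM_shift (f : nat -> R) : SM f -> SM (fun n => f n.+1).
Proof.
move=> H rho rho0; have rho0' := ltW rho0.
have h : 0 < rho / (rho + 1) by rewrite divr_gt0 // ltr_wpDl.
have hr : rho / (rho + 1) <= rho.
  by rewrite ler_pdivrMr ?ltr_wpDl // ler_peMr // lerDr.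
have h1 : rho / (rho + 1) <= 1.
  by rewrite ler_pdivrMr ?ltr_wpDl // mul1r lerDl.
have [N HN] := H _ h; exists N => n Nn.
apply: (le_trans (HN _ (leqW Nn))).
apply: (le_trans (y := (rho / (rho + 1)) ^+ n)).
  by rewrite exprS ler_piMl ?exprn_ge0 // ltW.
by apply: lerXn2r => //; rewrite nnegrE ltW.
Qed.

Lemma SM_const (c : R) : 0 <= c -> SM (fun _ => c) -> c = 0.
Proof.
move=> c0 H; apply/eqP; rewrite eq_le c0 andbT; apply/negP => /negP.
rewrite -ltNge => cpos.
have h : 0 < c / (c + 1) by rewrite divr_gt0 // ltr_wpDl.
have [N HN] := H _ h.
have := HN N.+1 (leqnSn N).
rewrite exprS => H1.
have h1 : c / (c + 1) < c by rewrite ltr_pdivrMr ?ltr_wpDl // ltr_pMr // ltrDr.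
have h2 : (c / (c + 1)) ^+ N <= 1.
  apply: exprn_ile1; first by rewrite ltW.
  by rewrite ler_pdivrMr ?ltr_wpDl // mul1r lerDl.
have := le_trans H1 (ler_piMr (ltW h) h2).
by rewrite leNgt h1.
Qed.
End SM.

Section Ban.
Variables (R : realType) (A : algType R[i]) (B : BanachStar A).
Local Notation N := (nrm B).

Lemma nrm0 : N 0 = 0.
Proof. by apply/(nrm_eq0 B). Qed.

Lemma nrmN (x : A) : N (- x) = N x.
Proof.
rewrite -scaleN1r nrmZ normrN1.
by rewrite /= mul1r.
Qed.

Lemma nrmB (x y : A) : N (x - y) = N (y - x).
Proof. by rewrite -nrmN opprB. Qed.

Lemma nrmX (x : A) n : N (x ^+ n) <= N x ^+ n.
Proof.
elim: n => [|n IH]; first by rewrite !expr0 nrm1.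
rewrite !exprS; apply: le_trans (nrm_submul _ _ _) _.
by apply: ler_wpM2l; [apply: nrm_ge0|].
Qed.

Lemma nrmM3 (x y z : A) : N (x * y * z) <= N x * N y * N z.
Proof.
apply: le_trans (nrm_submul _ _ _) _.
apply: ler_wpM2r; first exact: nrm_ge0.
exact: nrm_submul.
Qed.


Definition lim (s : nat -> A) (l : A) := forall eps : R, 0 < eps ->
  exists M, forall n, (M <= n)%N -> N (s n - l) < eps.

Lemma small0 (c : R) : 0 <= c -> (forall eps : R, 0 < eps -> c < eps) -> c = 0.
Proof.
move=> c0 H; apply/eqP; rewrite eq_le c0 andbT; apply/negP => /negP.
rewrite -ltNge => cpos.
have := H (c / 2) (divr_gt0 cpos (ltr0Sn _ 1)).
lra.
Qed.

Lemma lim_unique s l l' : lim s l -> lim s l' -> l = l'.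
Proof.
move=> H1 H2; apply/eqP; rewrite -subr_eq0; apply/eqP/(nrm_eq0 B).
apply: small0; first exact: nrm_ge0.
move=> eps eps0.
have e2 : 0 < eps / 2 by rewrite divr_gt0.
have [M1 HM1] := H1 _ e2; have [M2 HM2] := H2 _ e2.
have h1 := HM1 (maxn M1 M2) (leq_maxl _ _).
have h2 := HM2 (maxn M1 M2) (leq_maxr _ _).
have -> : l - l' = (s (maxn M1 M2) - l') - (s (maxn M1 M2) - l).
  by rewrite opprB [in RHS]addrC addrA subrK.
apply: le_lt_trans (nrm_triangle _ _ _) _.
rewrite nrmN (splitr eps) addrC.
by apply: ltrD.
Qed.

Lemma lim_ext s t l : (forall n, s n = t n) -> lim s l -> lim t l.
Proof.
move=> E H eps e0; have [M HM] := H _ e0; exists M => n Mn.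
by rewrite -E; apply: HM.
Qed.

Lemma lim_const s c : (forall n, s n = c) -> lim s c.
Proof. by move=> E eps e0; exists 0%N => n _; rewrite E subrr nrm0. Qed.

Lemma lim_shift s l : lim s l -> lim (fun n => s n.+1) l.
Proof.
move=> H eps e0; have [M HM] := H _ e0; exists M => n Mn.
by apply: HM; apply: leqW.
Qed.

Lemma lim_addl s l w : lim s l -> lim (fun n => w + s n) (w + l).
Proof.
move=> H eps e0; have [M HM] := H _ e0; exists M => n Mn.
by rewrite opprD addrACA subrr add0r; apply: HM.
Qed.

Lemma lim_mul s l K L : lim s l -> lim (fun n => K * s n * L) (K * l * L).
Proof.
move=> H eps e0.
have k0 : 0 < (N K + 1) * (N L + 1).
  by apply: mulr_gt0; apply: ltr_wpDl; rewrite ?nrm_ge0.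
have [M HM] := H _ (divr_gt0 e0 k0); exists M => n Mn.
have -> : K * s n * L - K * l * L = K * (s n - l) * L by rewrite mulrBr mulrBl.
apply: le_lt_trans (nrmM3 _ _ _) _.
have := HM n Mn; rewrite ltr_pdivlMr // => h.
apply: le_lt_trans h; rewrite mulrAC mulrA.
have hK : N K <= N K + 1 by rewrite lerDl.
have hL : N L <= N L + 1 by rewrite lerDl.
rewrite -[X in _ <= X]mulrA [X in _ <= X]mulrC.
apply: ler_wpM2r; first exact: nrm_ge0.
by apply: ler_pM; rewrite ?nrm_ge0.
Qed.


Lemma half_small (eps : R) : 0 < eps ->
  exists M, forall n, (M <= n)%N -> 2 * (2^-1) ^+ n < eps.
Proof.
move=> e0.
have h0 : 0 <= 2 / eps by rewrite divr_ge0 // ltW.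
exists (Num.bound (2 / eps)) => n Mn.
have hb := archi_boundP h0.
have h1 : 2 / eps < 2 ^+ n.
  apply: (lt_le_trans hb); rewrite -natrX ler_nat.
  by apply: (leq_trans Mn); apply: ltnW; apply: ltn_expl.
rewrite exprVn -/(_ / _) ltr_pdivrMr ?exprn_gt0 //.
by rewrite ltr_pdivrMr // mulrC in h1.
Qed.

Lemma series_conv (s : nat -> A) :
  (exists M, forall n, (M <= n)%N -> N (s n.+1 - s n) <= (2^-1) ^+ n) ->
  exists l, lim s l.
Proof.
move=> [M0 HM0]; apply: (@nrm_complete _ _ B s) => eps e0.
have tail : forall n j, (M0 <= n)%N ->
    N (s (n + j)%N - s n) <= 2 * (2^-1) ^+ n - 2 * (2^-1) ^+ (n + j).
  move=> n j Mn; elim: j => [|j IH].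
    by rewrite addn0 !subrr nrm0.
  have -> : s (n + j.+1)%N - s n = (s (n + j).+1 - s (n + j)%N) + (s (n + j)%N - s n).
    by rewrite addnS addrA subrK.
  apply: le_trans (nrm_triangle _ _ _) _.
  have := HM0 (n + j)%N (leq_trans Mn (leq_addr _ _)).
  rewrite addnS exprS.
  move: IH; set t := (2^-1) ^+ (n + j); set u := (2^-1) ^+ n.
  move=> IH h; lra.
have [M1 HM1] := half_small eps e0.
exists (maxn M0 M1) => m n; rewrite !geq_max => /andP[m0 m1] /andP[n0 n1].
have key : forall m' n', (M0 <= n')%N -> (M1 <= n')%N -> (n' <= m')%N -> N (s m' - s n') < eps.
  clear m n m0 m1 n0 n1 => m n h0 h1 nm.
  rewrite -(subnKC nm); apply: le_lt_trans (tail _ _ h0) _.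
  have := HM1 n h1; have : 0 <= 2 * (2^-1) ^+ (n + (m - n)) :> R.
    by rewrite mulr_ge0 // exprn_ge0.
  lra.
case: (leqP n m) => nm; first by apply: key.
by rewrite nrmB; apply: key => //; apply: ltnW.
Qed.


Lemma SM_shiftn (f : nat -> R) c : SM f -> SM (fun n => f (n + c)%N).
Proof.
move=> H; elim: c => [|c IH].
  by apply: SM_le H; exists 0%N => n _; rewrite addn0.
have := @SM_shift _ _ IH; apply: SM_le; exists 0%N => n _.
by rewrite addSn addnS.
Qed.

Lemma kill_gen (e : A) (g : nat -> R) : SM g ->
  (forall n, N e <= g n) -> e = 0.
Proof.
move=> Hg H; apply/(nrm_eq0 B); apply: SM_const; first exact: nrm_ge0.
by apply: SM_le Hg; exists 0%N => n _; apply: H.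
Qed.

Lemma real4 (a1 a2 a3 a4 a5 t u : R) : 0 <= a1 -> 0 <= a2 -> 0 <= a3 -> 0 <= a4 ->
  t <= u * a2 -> u <= a1 * a3 * a4 -> a4 <= a5 -> t <= a1 * a2 * (a3 * a5).
Proof.
move=> g1 g2 g3 g4 h1 h2 h3.
have h4 : a1 * a3 * a4 <= a1 * a3 * a5 by apply: ler_wpM2l; rewrite ?mulr_ge0.
have h5 : a1 * a3 * a5 * a2 = a1 * a2 * (a3 * a5) by ring.
rewrite -h5; apply: le_trans h1 _; apply: ler_wpM2r => //.
exact: le_trans h2 h4.
Qed.

Lemma real5 (a1 a1' a2 a3 d e t : R) : 0 <= a1 -> 0 <= a2 -> 0 <= a3 ->
  t <= a1 * a2 * a3 -> a1 <= a1' -> a3 <= d * e -> t <= (a2 * d) * (e * a1').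
Proof.
move=> g1 g2 g3 h1 h2 h3; apply: le_trans h1 _.
have -> : a2 * d * (e * a1') = a1' * a2 * (d * e) by ring.
by apply: ler_pM => //; [rewrite mulr_ge0 | apply: ler_pM].
Qed.

Lemma kill_r (s : nat -> A) (e K L M : A) (c : nat) :
  SM (fun n => N (s n)) ->
  (forall n, e = K * s (n + c)%N * L ^+ n * M) -> e = 0.
Proof.
move=> Hs H.
apply: (kill_gen _ (fun n => N K * N M * (N (s (n + c)%N) * N L ^+ n))).
  apply: SM_scale; first by rewrite mulr_ge0 ?nrm_ge0.
    by move=> n; rewrite mulr_ge0 ?exprn_ge0 ?nrm_ge0.
  apply: SM_geom; first exact: nrm_ge0.
    by move=> n; apply: nrm_ge0.
  exact: (SM_shiftn (fun m => N (s m)) c Hs).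
move=> n; rewrite (H n).
apply: (real4 _ _ _ _ _ _ _ (nrm_ge0 B K) (nrm_ge0 B M) (nrm_ge0 B _) (nrm_ge0 B (L ^+ n))
  (nrm_submul B _ M) (nrmM3 _ _ _) (nrmX L n)).
Qed.

Lemma kill_l (s : nat -> A) (e K L M : A) (c : nat) :
  SM (fun n => N (s n)) ->
  (forall n, e = K * L ^+ n * s (n + c)%N * M) -> e = 0.
Proof.
move=> Hs H.
apply: (kill_gen _ (fun n => N K * N M * (N (s (n + c)%N) * N L ^+ n))).
  apply: SM_scale; first by rewrite mulr_ge0 ?nrm_ge0.
    by move=> n; rewrite mulr_ge0 ?exprn_ge0 ?nrm_ge0.
  apply: SM_geom; first exact: nrm_ge0.
    by move=> n; apply: nrm_ge0.
  exact: (SM_shiftn (fun m => N (s m)) c Hs).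
move=> n; rewrite (H n).
apply: (real4 _ _ _ _ _ _ _ (nrm_ge0 B K) (nrm_ge0 B M) (nrm_ge0 B _) (nrm_ge0 B (L ^+ n))
  (nrm_submul B _ M) _ (nrmX L n)).
by rewrite mulrAC; apply: nrmM3.
Qed.

Lemma QN_SM (u : A) : quasinilpotent B u -> SM (fun n => N (u ^+ n)).
Proof. by move=> H; apply: RS_SM => //; move=> n; apply: nrm_ge0. Qed.
Arguments QN_SM {u}.


Lemma exp_idem (e : A) : e * e = e -> forall k, e ^+ k.+1 = e.
Proof. by move=> ee; elim=> [|k IH]; rewrite ?expr1 // exprS IH. Qed.
Arguments exp_idem {e}.

Lemma idem_c (e : A) : e * e = e -> (1 - e) * (1 - e) = 1 - e.
Proof. by move=> ee; rewrite mulrBl mul1r mulrBr mulr1 ee subrr subr0. Qed.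
Arguments idem_c {e}.

Lemma pow_om (a e : A) : a * e = e * a -> e * e = e ->
  forall k, (a * (1 - e)) ^+ k.+1 = (1 - e) * a ^+ k.+1.
Proof.
move=> ae ee k.
have c : GRing.comm a (1 - e) by rewrite /GRing.comm mulrBr mulrBl mulr1 mul1r ae.
rewrite exprMn_comm // (exp_idem (idem_c ee)).
have c' : GRing.comm (1 - e) a by [].
exact: esym (commrX k.+1 c').
Qed.

Lemma gD_half (a b c : A) : is_gDrazin_inv B a b -> is_gDrazin_inv B a c ->
  (1 - a * c) * (a * b) = 0 /\ (a * b) * (1 - a * c) = 0.
Proof.
move=> [b1 [b2 b3]] [c1 [c2 c3]].
have pp : a * b * (a * b) = a * b.
  by rewrite -mulrA [b * (a * b)]mulrA -b2 -mulrA b1.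
have qq : a * c * (a * c) = a * c.
  by rewrite -mulrA [c * (a * c)]mulrA -c2 -mulrA c1.
have aq : a * (a * c) = (a * c) * a by rewrite -mulrA -c2.
have nq : a - a * a * c = a * (1 - a * c) by rewrite mulrBr mulr1 mulrA.
have Hs := QN_SM c3.
have cq : forall k, (1 - a * c) * a ^+ k = a ^+ k * (1 - a * c).
  move=> k; have c0 : GRing.comm (1 - a * c) a.
    by rewrite /GRing.comm mulrBl mulrBr mul1r mulr1 aq.
  exact: (commrX k c0).
have cab : GRing.comm a b by [].
have cba : GRing.comm b a by [].
have Pk : forall k, (a * b) = a ^+ k.+1 * b ^+ k.+1.
  by move=> k; rewrite -exprMn_comm // exp_idem.
have Pk' : forall k, (a * b) = b ^+ k.+1 * a ^+ k.+1.
  by move=> k; rewrite -exprMn_comm // -b2 exp_idem.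
split.
  apply: (kill_r _ _ 1 b b 1%N Hs) => k.
  rewrite addn1 nq pow_om // mul1r -mulrA -exprSr !mulrA.
  by rewrite -[LHS]mulrA (Pk k) !mulrA.
apply: (kill_l _ _ b b 1 1%N Hs) => k.
rewrite addn1 nq pow_om // mulr1 -exprS !mulrA (Pk' k) //.
by rewrite -!mulrA (cq k.+1).
Qed.

Arguments gD_half {a b c}.

Lemma gD_unique (a b c : A) : is_gDrazin_inv B a b -> is_gDrazin_inv B a c -> b = c.
Proof.
move=> Hb Hc.
have [h1 h2] := gD_half Hb Hc.
have [h3 h4] := gD_half Hc Hb.
move: (Hb) (Hc) => [b1 [b2 b3]] [c1 [c2 c3]].
have pq : a * b = a * c.
  move: h1 h2 h3 h4; rewrite !mulrBl !mulrBr !mul1r !mulr1.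
  move=> /eqP; rewrite subr_eq0 => /eqP h1.
  move=> /eqP; rewrite subr_eq0 => /eqP h2.
  move=> /eqP; rewrite subr_eq0 => /eqP h3.
  move=> /eqP; rewrite subr_eq0 => /eqP h4.
  by rewrite h2 -h3.
have pb : a * b * b = b by rewrite -mulrA b1.
have pc : a * c * c = c by rewrite -mulrA c1.
have e0 : a * (b - c) = 0 by rewrite mulrBr pq subrr.
apply/eqP; rewrite -subr_eq0; apply/eqP.
have -> : b - c = b * a * (b - c).
  by rewrite -b2 mulrBr pb pq pc.
by rewrite -mulrA e0 mulr0.
Qed.


Section GCEP.
Variables (a x : A).
Hypothesis Hx : is_gcEP_inv B a x.

Let Rs n := a ^+ n - x * a ^+ n.+1.

Lemma gc_SM : SM (fun n => N (Rs n)).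
Proof.
case: Hx => _ [_ H]; apply: RS_SM => // n; exact: nrm_ge0.
Qed.

Lemma gc_F1 : a * x * x = x.
Proof. by case: Hx => h _; rewrite -mulrA -h. Qed.

Lemma gc_F2 n : x = a ^+ n * x ^+ n.+1.
Proof.
elim: n => [|n IH]; first by rewrite expr0 mul1r expr1.
have -> : a ^+ n.+1 * x ^+ n.+2 = a ^+ n * (a * x * x) * x ^+ n.
  by rewrite exprSr !exprS !mulrA.
by rewrite gc_F1 {1}IH exprS mulrA.
Qed.

Lemma gc_G1 m : (1 - a * x) * Rs m = (1 - a * x) * a ^+ m.
Proof.
rewrite /Rs mulrBr mulrA.
have -> : (1 - a * x) * x = 0 by rewrite mulrBl mul1r gc_F1 subrr.
by rewrite mul0r subr0.
Qed.

Lemma gc_F4 : x * a * x = x.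
Proof.
apply/eqP; rewrite eq_sym -subr_eq0; apply/eqP.
apply: (kill_r _ _ 1 x x 0%N gc_SM) => n.
have e1 : x * a ^+ n.+1 * x ^+ n.+1 = x * a * x.
  by rewrite exprS mulrA -mulrA -(gc_F2 n).
rewrite addn0 mul1r.
by rewrite -[RHS]mulrA -exprSr /Rs mulrBl -(gc_F2 n) e1.
Qed.

Lemma gc_F5 : a * x * (a * x) = a * x.
Proof. by rewrite mulrA -[a * x * a]mulrA -mulrA gc_F4. Qed.

Lemma gc_P n : a ^+ n.+1 * x ^+ n.+1 = a * x.
Proof. by rewrite exprS -mulrA -(gc_F2 n). Qed.

Lemma gc_F7 : x * a * (a * x) = a * x.
Proof.
apply/eqP; rewrite eq_sym -subr_eq0; apply/eqP.
apply: (kill_r _ _ 1 x x 1%N gc_SM) => n.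
have e1 : x * a ^+ n.+2 * x ^+ n.+1 = x * a * (a * x).
  by rewrite exprS mulrA -mulrA (gc_P n).
by rewrite addn1 mul1r -[RHS]mulrA -exprSr /Rs mulrBl (gc_P n) e1.
Qed.

Lemma gc_F6 : (1 - a * x) * a * (a * x) = 0.
Proof.
apply: (kill_r _ _ (1 - a * x) x x 2%N gc_SM) => n.
have e1 : (1 - a * x) * a ^+ n.+2 * x ^+ n.+1 = (1 - a * x) * a * (a * x).
  by rewrite exprS mulrA -mulrA (gc_P n).
by rewrite addn2 -[RHS]mulrA -exprSr -[(1 - a * x) * Rs n.+2]/((1 - a * x) * Rs n.+2) gc_G1 e1.
Qed.

End GCEP.
Arguments gc_SM {a x}. Arguments gc_F1 {a x}. Arguments gc_F2 {a x}. Arguments gc_G1 {a x}.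
Arguments gc_F4 {a x}. Arguments gc_F5 {a x}. Arguments gc_P {a x}. Arguments gc_F7 {a x}. Arguments gc_F6 {a x}.


Lemma gc_half (a x y : A) : is_gcEP_inv B a x -> is_gcEP_inv B a y ->
  (1 - a * y) * (a * x) = 0.
Proof.
move=> Hx Hy.
apply: (kill_r _ _ (1 - a * y) x x 1%N (gc_SM Hy)) => n.
have G := gc_G1 Hy (n.+1).
rewrite addn1 -[RHS]mulrA -exprSr G.
by rewrite -mulrA (gc_P Hx n).
Qed.

Arguments gc_half {a x y}.

Lemma gc_unique (a x y : A) : is_gcEP_inv B a x -> is_gcEP_inv B a y -> x = y.
Proof.
move=> Hx Hy.
have h1 := gc_half Hx Hy; have h2 := gc_half Hy Hx.
move: h1 h2; rewrite !mulrBl !mul1r.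
move=> /eqP; rewrite subr_eq0 => /eqP h1.
move=> /eqP; rewrite subr_eq0 => /eqP h2.
have sx : star B (a * x) = a * x by case: Hx => _ [].
have sy : star B (a * y) = a * y by case: Hy => _ [].
have pq : a * x = a * y.
  by rewrite -sx h1 starM sx sy -h2.
have e1 : x = x * (a * x) by rewrite mulrA (gc_F4 Hx).
have e2 : y = a * x * y by rewrite pq (gc_F1 Hy).
rewrite {1}e1 pq e2.
by rewrite !mulrA -[x * a * a * x]mulrA (gc_F7 Hx).
Qed.


Lemma lannP (d q : A) : lann d = lann q -> forall y, y * d = 0 -> y * q = 0.
Proof. by move=> L y yd; have h : lann d y := yd; rewrite L in h. Qed.

Arguments lannP {d q}.

Lemma back (a d q : A) : is_gDrazin_inv B a d -> is_projection B q ->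
  lann d = lann q -> is_gcEP_inv B a (d * q).
Proof.
move=> [d1 [d2 d3]] [q1 q2] L.
have L1 := lannP L.
have L2 := lannP (esym L).
have qd : q * d = d.
  have : (1 - q) * d = 0 by apply: L2; rewrite mulrBl mul1r -q1 subrr.
  by rewrite mulrBl mul1r => /eqP; rewrite subr_eq0 => /eqP <-.
have dd : a * d * d = d by rewrite -mulrA d1.
have eq_ : a * d * q = q.
  have : (1 - a * d) * q = 0 by apply: L1; rewrite mulrBl mul1r dd subrr.
  by rewrite mulrBl mul1r => /eqP; rewrite subr_eq0 => /eqP <-.
have qe : q * (a * d) = a * d.
  have : (1 - q) * (a * d) = 0 by rewrite d2 mulrA (L2 (1 - q)) ?mul0r // mulrBl mul1r -q1 subrr.
  by rewrite mulrBl mul1r => /eqP; rewrite subr_eq0 => /eqP h; exact: esym h.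
have de : d * (a * d) = d by rewrite mulrA -d2 dd.
have ae : a * (a * d) = (a * d) * a by rewrite -mulrA -d2.
have ee : a * d * (a * d) = a * d by rewrite -mulrA de.
split; [|split].
- by rewrite !mulrA -[a * d * q * d]mulrA qd dd.
- by rewrite mulrA eq_ -q2.
have Hs := QN_SM d3.
have nq : a - a * a * d = a * (1 - a * d) by rewrite mulrBr mulr1 mulrA.
apply: SM_RS; first by move=> n; apply: nrm_ge0.
set u := a - a * a * d.
have key : forall n, a ^+ n.+1 - d * q * a ^+ n.+2 = u ^+ n.+1 - d * q * u ^+ n.+2.
  move=> n; rewrite /u nq !pow_om //.
  have s1 : d * q * ((1 - a * d) * a ^+ n.+2) = d * q * a ^+ n.+2 - a * d * a ^+ n.+1.
    rewrite mulrBl mul1r mulrBr.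
    have -> : d * q * (a * d * a ^+ n.+2) = d * (q * (a * d)) * a ^+ n.+2 by rewrite !mulrA.
    by rewrite qe de exprS mulrA -d2.
  have s2 : (1 - a * d) * a ^+ n.+1 = a ^+ n.+1 - a * d * a ^+ n.+1 by rewrite mulrBl mul1r.
  by rewrite s1 s2 opprB addrA subrK.
apply: (SM_le (fun n => (1 + N (d * q) * N u) * N (u ^+ n))); last first.
  apply: SM_scale => //; last by move=> n; apply: nrm_ge0.
  by rewrite addr_ge0 ?mulr_ge0 ?nrm_ge0.
exists 1%N => -[|m] // _; rewrite key.
apply: le_trans (nrm_triangle _ _ _) _.
rewrite nrmN mulrDl mul1r lerD2l exprS.
apply: le_trans (nrm_submul _ _ _) _.
rewrite -mulrA; apply: ler_wpM2l; first exact: nrm_ge0.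
exact: nrm_submul.
Qed.



Fixpoint ser (w x a : A) (n : nat) : A :=
  if n is m.+1 then w + x * ser w x a m * a else 0.

Lemma ser_diff w x a n : ser w x a n.+1 - ser w x a n = x ^+ n * w * a ^+ n.
Proof.
elim: n => [|n IH]; first by rewrite /= mulr0 mul0r addr0 subr0 expr0 mul1r mulr1.
rewrite /= in IH *.
rewrite opprD addrACA subrr add0r.
rewrite -mulrBl -mulrBr IH.
by rewrite exprS exprSr !mulrA.
Qed.

Section FWD.
Variables (a x : A).
Hypothesis Hx : is_gcEP_inv B a x.
Let p := a * x.
Let w := x * x * a * (1 - p).

Lemma fw_ap : a * p = p * a * p.
Proof.
have := gc_F6 Hx; rewrite !mulrBl !mul1r => /eqP.
by rewrite subr_eq0 => /eqP.
Qed.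

Lemma fw_px : p * x = x.
Proof. exact: gc_F1 Hx. Qed.

Lemma fw_pp : p * p = p.
Proof. exact: gc_F5 Hx. Qed.

Lemma fw_wp : w * p = 0.
Proof. by rewrite /w -mulrA mulrBl mul1r fw_pp subrr mulr0. Qed.

Lemma fw_ser_p n : ser w x a n * p = 0.
Proof.
elim: n => [|n IH]; first by rewrite mul0r.
rewrite /= mulrDl fw_wp add0r -mulrA fw_ap.
have -> : x * ser w x a n * (p * a * p) = x * (ser w x a n * p) * (a * p) by rewrite !mulrA.
by rewrite IH mulr0 mul0r.
Qed.

Lemma fw_bound : exists M, forall n, (M <= n)%N ->
  N (ser w x a n.+1 - ser w x a n) <= (2^-1) ^+ n.
Proof.
have H : SM (fun n => (N (x * x * a) * N (1 - p)) * (N (a ^+ n - x * a ^+ n.+1) * N x ^+ n)).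
  apply: SM_scale; first by rewrite mulr_ge0 ?nrm_ge0.
    by move=> n; rewrite mulr_ge0 ?exprn_ge0 ?nrm_ge0.
  apply: SM_geom; first exact: nrm_ge0.
    by move=> n; apply: nrm_ge0.
  exact: (gc_SM Hx).
have h2 : (0 : R) < 2^-1 by rewrite invr_gt0.
have [M HM] := H _ h2.
exists M => n Mn; apply: le_trans (HM n Mn).
rewrite ser_diff.
have -> : x ^+ n * w * a ^+ n = x ^+ n * (x * x * a) * ((1 - p) * (a ^+ n - x * a ^+ n.+1)).
  by rewrite (gc_G1 Hx) /w !mulrA.
apply: real5 (nrmM3 _ _ _) (nrmX _ _) (nrm_submul _ _ _); exact: nrm_ge0.
Qed.

Lemma fw_X : exists X, [/\ X * p = 0, p * X = X & X = w + x * X * a].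
Proof.
have [X HX] := series_conv _ fw_bound.
exists X.
have XP : X * p = 0.
  have := lim_unique (fun n => 1 * ser w x a n * p) (1 * X * p) 0 (lim_mul _ _ 1 p HX).
  rewrite mul1r; apply.
  by apply: lim_const => n; rewrite mul1r fw_ser_p.
have FX : X = w + x * X * a.
  apply: (lim_unique (fun n => ser w x a n.+1)); first exact: lim_shift.
  exact: lim_addl (lim_mul _ _ x a HX).
split => //.
have pw : p * w = w by rewrite /w !mulrA (gc_F1 Hx).
by rewrite {2}FX {1}FX mulrDr pw mulrA mulrA (gc_F1 Hx).
Qed.

Lemma fw_gD : exists d, is_gDrazin_inv B a d /\ lann d = lann p.
Proof.
have [X [XP pX FX]] := fw_X.
have F1 : p * x = x by exact: (gc_F1 Hx).
have F4 : x * a * x = x by exact: (gc_F4 Hx).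
have F7 : x * a * p = p by exact: (gc_F7 Hx).
have ap := fw_ap.
have pp := fw_pp.
have aw : a * w = x * a - p.
  have -> : a * w = a * x * x * a * (1 - p) by rewrite /w !mulrA.
  by rewrite gc_F1 // mulrBr mulr1 F7.
have aX : a * X = x * a - p + X * a.
  rewrite {1}FX mulrDr aw !mulrA.
  have -> : a * x * X = p * X by [].
  by rewrite pX.
set d := x + X.
have da : a * d = d * a.
  rewrite /d mulrDr aX mulrDl.
  by rewrite addrA [a * x + _]addrC subrK.
have ad : a * d = x * a + X * a by rewrite da /d mulrDl.
have xaX : x * a * X = X by rewrite -pX mulrA F7 pX.
have Xax : X * a * x = X * p by rewrite -mulrA.
have XaX : X * a * X = 0.
  rewrite -{2}pX mulrA -[X * a * p]mulrA ap.
  have -> : X * (p * a * p) * X = (X * p) * (a * p * X) by rewrite !mulrA.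
  by rewrite XP mul0r.
have dd : a * (d * d) = d.
  rewrite mulrA ad /d !mulrDr !mulrDl F4 xaX Xax XaX XP addr0 addr0.
  by [].
set e := a * d.
have ep : e * p = p.
  rewrite /e ad mulrDl F7 -mulrA ap.
  have -> : X * (p * a * p) = (X * p) * (a * p) by rewrite !mulrA.
  by rewrite XP mul0r addr0.
have ae : a * e = e * a by rewrite /e -mulrA -da.
have ee : e * e = e by rewrite /e -mulrA [d * (a * d)]mulrA -da -mulrA dd.
have omp : (1 - e) * (1 - p) = 1 - e.
  by rewrite mulrBr mulr1 mulrBl mul1r ep subrr subr0.
have nq : a - a * a * d = a * (1 - e) by rewrite mulrBr mulr1 mulrA.
exists d; split.
  split => //; split => //.
  apply: SM_RS; first by move=> n; apply: nrm_ge0.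
  apply: (SM_le (fun n => N (1 - e) * (N (1 - p) * N (a ^+ n - x * a ^+ n.+1)))).
    exists 1%N => -[|k] // _.
    rewrite nq pow_om // -{1}omp -mulrA -(gc_G1 Hx).
    apply: le_trans (nrm_submul _ _ _) _.
    apply: ler_wpM2l; first exact: nrm_ge0.
    exact: nrm_submul.
  apply: SM_scale; first exact: nrm_ge0.
    by move=> n; rewrite mulr_ge0 ?nrm_ge0.
  apply: SM_scale; first exact: nrm_ge0.
    by move=> n; apply: nrm_ge0.
  exact: (gc_SM Hx).
have dp : d * p = x by rewrite /d mulrDl XP addr0 /p mulrA F4.
have pd : p * d = d by rewrite /d mulrDr F1 pX.
rewrite /lann; apply/funext => y; apply/propext; split => /= h.
  by rewrite -F7 -dp !mulrA h !mul0r.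
by rewrite -pd mulrA h mul0r.
Qed.

End FWD.


Lemma gD_spec (a : A) : gDrazin_invertible B a -> is_gDrazin_inv B a (gDrazin_inv B a).
Proof. by case=> b hb; rewrite /gDrazin_inv; apply: (xgetI 0 (x := b)). Qed.

Lemma gc_spec (a : A) : gcEP_invertible B a -> is_gcEP_inv B a (gcEP_inv B a).
Proof. by case=> b hb; rewrite /gcEP_inv; apply: (xgetI 0 (x := b)). Qed.

End Ban.

Local Close Scope classical_set_scope.

Theorem theorem2p3 (R : realType) (A : algType R[i]) (B : BanachStar A) (a : A) :
  (gcEP_invertible B a <->
     (gDrazin_invertible B a /\
      exists q : A, is_projection B q /\ lann (gDrazin_inv B a) = lann q))
  /\
  (forall q : A, gcEP_invertible B a -> is_projection B q ->
     lann (gDrazin_inv B a) = lann q ->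
     gcEP_inv B a = gDrazin_inv B a * q).
Proof.
split; [split|].
- case=> x Hx.
  have [d [Hd Ld]] := fw_gD _ _ _ _ _ Hx.
  have e : gDrazin_inv B a = d := gD_unique _ _ _ _ _ _ (gD_spec _ _ _ _ (ex_intro _ d Hd)) Hd.
  split; first by exists d.
  exists (a * x); split; last by rewrite e.
  split; first by rewrite (gc_F5 _ _ _ _ _ Hx).
  by case: Hx => _ [-> _].
- case=> Hd [q [Hq L]].
  by exists (gDrazin_inv B a * q); apply: (back _ _ _ _ _ _ (gD_spec _ _ _ _ Hd) Hq L).
move=> q Hg Hq L.
case: (Hg) => x Hx.
have [d [Hd _]] := fw_gD _ _ _ _ _ Hx.
have Hd' := gD_spec _ _ _ _ (ex_intro _ d Hd).
exact: (gc_unique _ _ _ _ _ _ (gc_spec _ _ _ _ Hg) (back _ _ _ _ _ _ Hd' Hq L)).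
Qed.
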